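(* Let $G$ be a finite group, $\pi$ a real representation of $G$, and $\pi'=\pi\oplus\det\pi$, where $\det\pi=\det\circ\pi$ is regarded as a one-dimensional real representation. Then $\pi$ is spinorial if and only if $\pi'$ is spinorial.
   Context: A real representation on a Euclidean space $V$ is regarded as a homomorphism $\pi:G\to\mathrm{O}(V)$; it is spinorial if there is a homomorphism $\hat\pi:G\to\mathrm{Pin}(V)$ with $\rho\circ\hat\pi=\pi$, where $\mathrm{Pin}(V)$ is the Pin group of $V$ (from the Clifford algebra with $v^2=-|v|^2$) and $\rho:\mathrm{Pin}(V)\to\mathrm{O}(V)$ the standard double cover with kernel $\{\pm1\}$. *)

(* Defs.v *)
From HB Require Import structures.
From mathcomp Require Import all_boot all_order all_algebra all_fingroup.
From mathcomp Require Import reals.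
Set Implicit Arguments. Unset Strict Implicit. Unset Printing Implicit Defensive.
Import Order.TTheory GRing.Theory Num.Theory.
Local Open Scope ring_scope.

(* Euclidean space V = R^n (column vectors 'cV[R]_n, standard inner product).
   O(V) = orthogonal n x n matrices acting on column vectors by v |-> A *m v. *)

(* The Clifford algebra Cl(R^n) with v^2 = -|v|^2, realised on the basis
   e_A (A a subset of {0..n-1}), e_A = e_{a1} ... e_{ak} (a1 < ... < ak),
   with e_i e_j = - e_j e_i (i <> j) and e_i^2 = -1. *)
Definition Cl (R : realType) (n : nat) := {ffun {set 'I_n} -> R}.

Definition cl_symdiff n (A B : {set 'I_n}) : {set 'I_n} := (A :\: B) :|: (B :\: A).

(* e_A e_B = cl_sign A B * e_{A Δ B} *)
Definition cl_sign (R : realType) n (A B : {set 'I_n}) : R :=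
  (-1) ^+ (#|[set p : 'I_n * 'I_n | (p.1 \in A) && (p.2 \in B) && (val p.2 < val p.1)%N]|
           + #|A :&: B|).

Definition cl_mul (R : realType) n (x y : Cl R n) : Cl R n :=
  [ffun C : {set 'I_n} => \sum_(A : {set 'I_n}) \sum_(B : {set 'I_n})
               (if cl_symdiff A B == C then cl_sign R A B * x A * y B else 0)].

Definition cl_one (R : realType) n : Cl R n := [ffun A : {set 'I_n} => (A == set0)%:R].

Definition cl_vec (R : realType) n (v : 'cV[R]_n) : Cl R n :=
  [ffun A : {set 'I_n} => \sum_(i < n) v i 0 * (A == [set i])%:R].

Definition cl_alpha (R : realType) n (x : Cl R n) : Cl R n :=
  [ffun A : {set 'I_n} => (-1) ^+ #|A| * x A].

(* Clifford conjugation (transpose composed with alpha); for x in Pin(V)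
   it is the inverse of x. *)
Definition cl_conj (R : realType) n (x : Cl R n) : Cl R n :=
  [ffun A : {set 'I_n} => (-1) ^+ (#|A| + 'C(#|A|, 2)) * x A].

Definition unit_vector (R : realType) n (v : 'cV[R]_n) : Prop :=
  (v^T *m v) 0 0 = 1.

(* Pin(V): the subgroup of Cl(V)^x generated by unit vectors, i.e. the set of
   finite products of unit vectors (closed under inverses since u^-1 = -u = u u u). *)
Definition in_Pin (R : realType) n (x : Cl R n) : Prop :=
  exists s : seq 'cV[R]_n,
    (forall v, v \in s -> unit_vector v) /\
    x = foldr (@cl_mul R n) (cl_one R n) (map (@cl_vec R n) s).

(* rho : Pin(V) -> O(V), rho(x) v = alpha(x) v x^{-1}; column j of rho x is
   the image of the basis vector e_j. *)
Definition rho (R : realType) n (x : Cl R n) : 'M[R]_n :=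
  \matrix_(i < n, j < n)
     (cl_mul (cl_mul (cl_alpha x) (cl_vec (delta_mx j (0 : 'I_1)))) (cl_conj x)) [set i].

Definition orth_rep (R : realType) (gT : finGroupType) (G : {group gT}) n
    (pi : gT -> 'M[R]_n) : Prop :=
  (forall g, g \in G -> pi g *m (pi g)^T = 1%:M) /\
  {in G &, forall g h, pi (g * h)%g = pi g *m pi h}.

Definition spinorial (R : realType) (gT : finGroupType) (G : {group gT}) n
    (pi : gT -> 'M[R]_n) : Prop :=
  exists pihat : gT -> Cl R n,
    (forall g, g \in G -> in_Pin (pihat g)) /\
    {in G &, forall g h, pihat (g * h)%g = cl_mul (pihat g) (pihat h)} /\
    (forall g, g \in G -> rho (pihat g) = pi g).

Definition dsum_det (R : realType) (gT : finGroupType) n (pi : gT -> 'M[R]_n)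
  : gT -> 'M[R]_(n + 1) :=
  fun g => block_mx (pi g) 0 0 (\det (pi g))%:M.

(* Main.v *)
Require Import Defs.
From HB Require Import structures.
From mathcomp Require Import all_boot all_order all_algebra all_fingroup.
From mathcomp Require Import reals.
Set Implicit Arguments. Unset Strict Implicit. Unset Printing Implicit Defensive.
Import Order.TTheory GRing.Theory Num.Theory.
Local Open Scope ring_scope.
From mathcomp Require Import ring lra.
From Stdlib Require Import IndefiniteDescription.
Section Sign.
Variable R : realType.
Variable n : nat.
Implicit Types A B C D : {set 'I_n}.

Definition sgn (b : bool) : R := if b then -1 else 1.
Lemma sgnX b c : sgn (b (+) c) = sgn b * sgn c.
Proof. by case: b; case: c; rewrite /sgn /= ?mulr1 ?mul1r ?mulrNN ?mulr1. Qed.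
Lemma sgn2 b : sgn b * sgn b = 1.
Proof. by case: b; rewrite /sgn ?mulrNN mulr1. Qed.
Lemma sgn_neq0 b : sgn b != 0.
Proof. by case: b; rewrite /sgn ?oppr_eq0 oner_eq0. Qed.

Definition sg A B : R :=
  \prod_(i : 'I_n) \prod_(j : 'I_n) sgn [&& i \in A, j \in B & (j <= i)%N].
Definition sd A B := cl_symdiff A B.

Lemma in_sd A B i : (i \in sd A B) = (i \in A) (+) (i \in B).
Proof. by rewrite /sd /cl_symdiff !inE; case: (i \in A); case: (i \in B). Qed.

Lemma sdC A B : sd A B = sd B A.
Proof. by apply/setP => i; rewrite !in_sd addbC. Qed.
Lemma sdA A B C : sd A (sd B C) = sd (sd A B) C.
Proof. by apply/setP => i; rewrite !in_sd addbA. Qed.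
Lemma sd0 A : sd set0 A = A.
Proof. by apply/setP => i; rewrite !in_sd inE. Qed.
Lemma sdv A : sd A A = set0.
Proof. by apply/setP => i; rewrite !in_sd inE addbb. Qed.
Lemma sdK A B C : (sd A B == sd A C) = (B == C).
Proof.
apply/eqP/eqP => [h|->] //; apply/setP => i.
by have := congr1 (fun X : {set 'I_n} => i \in X) h; rewrite /= !in_sd => /addbI.
Qed.

Lemma sgDl A B C : sg (sd A B) C = sg A C * sg B C.
Proof.
rewrite /sg -big_split; apply eq_bigr => i _; rewrite -big_split; apply eq_bigr => j _ /=.
by rewrite in_sd -sgnX; congr sgn; case: (i \in A); case: (i \in B); case: (j \in C); case: (j <= i)%N.
Qed.
Lemma sgDr A B C : sg A (sd B C) = sg A B * sg A C.
Proof.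
rewrite /sg -big_split; apply eq_bigr => i _; rewrite -big_split; apply eq_bigr => j _ /=.
by rewrite in_sd -sgnX; congr sgn; case: (i \in A); case: (j \in B); case: (j \in C); case: (j <= i)%N.
Qed.
Lemma sg2 A B : sg A B * sg A B = 1.
Proof.
rewrite /sg -big_split /=; apply big1 => i _; rewrite -big_split /=; apply big1 => j _ /=.
exact: sgn2.
Qed.
Lemma sg0l B : sg set0 B = 1.
Proof. by apply big1 => i _; apply big1 => j _; rewrite inE. Qed.
Lemma sg0r A : sg A set0 = 1.
Proof. by apply big1 => i _; apply big1 => j _; rewrite inE andbF. Qed.

Lemma cocycle A B C : sg A B * sg (sd A B) C = sg A (sd B C) * sg B C.
Proof. by rewrite sgDl sgDr mulrA. Qed.

Definition par A : R := \prod_(i : 'I_n) sgn (i \in A).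
Lemma parD A B : par (sd A B) = par A * par B.
Proof. by rewrite /par -big_split; apply eq_bigr => i _; rewrite in_sd sgnX. Qed.
Lemma parE A : par A = (-1) ^+ #|A|.
Proof.
rewrite /par -prodr_const (bigID (fun i => i \in A)) /= [X in _ * X]big1 ?mulr1.
  by apply eq_bigr => i ->.
by move=> i /negPf ->.
Qed.
Lemma par_odd A : par A = sgn (odd #|A|).
Proof. by rewrite parE -signr_odd /sgn; case: odd; rewrite ?expr1 ?expr0. Qed.
Lemma sgn_inj : injective sgn.
Proof.
have h : (-1 : R) != 1 by rewrite eq_sym -subr_eq0 opprK -(natrD R 1 1) pnatr_eq0.
by case; case => //; rewrite /sgn => /eqP; rewrite ?(negPf h) // eq_sym (negPf h).
Qed.
Lemma odd_sd A B : odd #|sd A B| = odd #|A| (+) odd #|B|.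
Proof. by apply: sgn_inj; rewrite sgnX -!par_odd parD. Qed.

End Sign.
Section Cliff.
Variable R : realType.
Variable n : nat.
Implicit Types A B C D E F : {set 'I_n}.
Local Notation sgn := (@sgn R).
Local Notation sg := (@sg R n).
Local Notation sd := (@sd n).
Local Notation CL := (Cl R n).
Implicit Types x y z w : CL.

Lemma prod_sgn_pred1 (i : 'I_n) (P : pred 'I_n) :
  \prod_(j : 'I_n) sgn (P j && (j == i)) = sgn (P i).
Proof.
rewrite (bigD1 i) //= eqxx andbT big1 ?mulr1 // => j /negPf ->.
by rewrite andbF.
Qed.

Lemma prod_m1 (T : finType) (S : {pred T}) : \prod_(i in S) (-1 : R) = \prod_i sgn (i \in S).
Proof. by rewrite big_mkcond; apply eq_bigr => i _; case: (i \in S). Qed.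

Lemma cl_signE A B : cl_sign R A B = sg A B.
Proof.
rewrite /cl_sign exprD -!prodr_const !prod_m1.
have -> : sg A B = (\prod_i \prod_j sgn [&& i \in A, j \in B & (j < i)%N]) *
                   (\prod_i \prod_j sgn ((i \in A) && (j \in B) && (j == i))).
  rewrite /sg -big_split; apply eq_bigr => i _; rewrite -big_split; apply eq_bigr => j _ /=.
  rewrite -sgnX; congr sgn.
  have -> : (j == i) = (nat_of_ord j == nat_of_ord i) by [].
  by case: (ltngtP j i) => h; rewrite ?andbT ?andbF ?addbF ?addFb.
congr (_ * _).
  rewrite pair_big /=.
  by apply: eq_big => // -[i j] _; rewrite inE /= andbA.
apply eq_bigr => i _; rewrite (prod_sgn_pred1 i (fun j => (i \in A) && (j \in B))) inE.
by case: (i \in A); case: (i \in B).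
Qed.

Lemma sum_if_eq (G : {set 'I_n} -> R) C :
  \sum_B (if B == C then G B else 0) = G C.
Proof. by rewrite -big_mkcond big_pred1_eq. Qed.
Lemma sum_if_eq' (G : {set 'I_n} -> R) X :
  \sum_C (if X == C then G C else 0) = G X.
Proof. by rewrite -big_mkcond (big_pred1 X) // => C; rewrite /= eq_sym. Qed.

Lemma mulE x y C : cl_mul x y C =
  \sum_A \sum_B (if sd A B == C then sg A B * x A * y B else 0).
Proof. by rewrite ffunE; apply eq_bigr => A _; apply eq_bigr => B _; rewrite cl_signE. Qed.

Lemma mul1x y : cl_mul (cl_one R n) y = y.
Proof.
apply/ffunP => C; rewrite mulE (bigD1 set0) //= [X in _ + X]big1 ?addr0.
  rewrite /cl_one; under eq_bigr do rewrite ffunE eqxx sd0 sg0l mulr1 mul1r.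
  exact: sum_if_eq.
move=> A /negPf hA; apply big1 => B _; rewrite /cl_one ffunE hA mulr0 mul0r.
by case: ifP.
Qed.

Lemma mulx1 x : cl_mul x (cl_one R n) = x.
Proof.
apply/ffunP => C; rewrite mulE.
rewrite -[RHS](sum_if_eq (fun A => x A)); apply eq_bigr => A _.
rewrite (bigD1 set0) //= [X in _ + X]big1 ?addr0.
  by rewrite /cl_one ffunE eqxx sdC sd0 sg0r mulr1 mul1r.
move=> B /negPf hB; rewrite /cl_one ffunE hB mulr0.
by case: ifP.
Qed.

Definition N3 x y z D := \sum_A \sum_B \sum_E
  (if sd (sd A B) E == D then sg A B * sg (sd A B) E * (x A * y B * z E) else 0).

Lemma mulA_l x y z D : cl_mul (cl_mul x y) z D = N3 x y z D.
Proof.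
rewrite mulE /N3.
transitivity (\sum_C \sum_E \sum_A \sum_B (if sd A B == C then
    (if sd C E == D then sg A B * sg C E * (x A * y B * z E) else 0) else 0)).
  apply eq_bigr => C _; apply eq_bigr => E _; rewrite mulE.
  case: ifP => hD.
    rewrite mulr_sumr mulr_suml; apply eq_bigr => A _.
    rewrite mulr_sumr mulr_suml; apply eq_bigr => B _.
    by case: ifP => _; ring.
  by rewrite big1 // => A _; rewrite big1 // => B _; case: ifP.
rewrite exchange_big /=.
transitivity (\sum_E \sum_A \sum_B \sum_C (if sd A B == C then
    (if sd C E == D then sg A B * sg C E * (x A * y B * z E) else 0) else 0)).
  apply eq_bigr => E _; rewrite exchange_big; apply eq_bigr => A _.
  by rewrite exchange_big.
rewrite exchange_big; apply eq_bigr => A _; rewrite exchange_big; apply eq_bigr => B _.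
apply eq_bigr => E _.
by rewrite (sum_if_eq' (fun C => if sd C E == D then sg A B * sg C E * (x A * y B * z E) else 0)).
Qed.

Lemma mulA_r x y z D : cl_mul x (cl_mul y z) D = N3 x y z D.
Proof.
rewrite mulE /N3.
transitivity (\sum_A \sum_F \sum_B \sum_E (if sd B E == F then
    (if sd A F == D then sg A F * sg B E * (x A * y B * z E) else 0) else 0)).
  apply eq_bigr => A _; apply eq_bigr => F _; rewrite mulE.
  case: ifP => hD.
    rewrite mulr_sumr; apply eq_bigr => B _.
    rewrite mulr_sumr; apply eq_bigr => E _.
    by case: ifP => _; ring.
  by rewrite big1 // => B _; rewrite big1 // => E _; case: ifP.
apply eq_bigr => A _.
transitivity (\sum_B \sum_E \sum_F (if sd B E == F then
    (if sd A F == D then sg A F * sg B E * (x A * y B * z E) else 0) else 0)).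
  rewrite exchange_big; apply eq_bigr => B _; by rewrite exchange_big.
apply eq_bigr => B _; apply eq_bigr => E _.
rewrite (sum_if_eq' (fun F => if sd A F == D then sg A F * sg B E * (x A * y B * z E) else 0)) /=.
rewrite sdA; case: ifP => // _.
by rewrite -cocycle.
Qed.

Lemma mulA x y z : cl_mul (cl_mul x y) z = cl_mul x (cl_mul y z).
Proof. by apply/ffunP => D; rewrite mulA_l mulA_r. Qed.

End Cliff.
Section Cliff2.
Variable R : realType.
Variable n : nat.
Implicit Types A B C D E F X : {set 'I_n}.
Local Notation sgn := (@sgn R).
Local Notation sg := (@sg R n).
Local Notation sd := (@sd n).
Local Notation CL := (Cl R n).
Implicit Types x y z w : CL.

Definition cls (a : R) x : CL := [ffun A => a * x A].
Definition cladd x y : CL := [ffun A => x A + y A].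
Local Notation one := (cl_one R n).
Lemma claddE x y A : cladd x y A = x A + y A. Proof. by rewrite ffunE. Qed.
Lemma clsE a x A : cls a x A = a * x A. Proof. by rewrite ffunE. Qed.
Lemma oneE A : one A = (A == set0)%:R. Proof. by rewrite ffunE. Qed.

Lemma mulDl x y z : cl_mul (cladd x y) z = cladd (cl_mul x z) (cl_mul y z).
Proof.
apply/ffunP => C; rewrite claddE !mulE -big_split /=; apply eq_bigr => A _.
rewrite -big_split /=; apply eq_bigr => B _ /=; rewrite ?claddE.
by case: ifP => _; [ring | rewrite addr0].
Qed.
Lemma mulDr x y z : cl_mul x (cladd y z) = cladd (cl_mul x y) (cl_mul x z).
Proof.
apply/ffunP => C; rewrite claddE !mulE -big_split /=; apply eq_bigr => A _.
rewrite -big_split /=; apply eq_bigr => B _ /=; rewrite ?claddE.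
by case: ifP => _; [ring | rewrite addr0].
Qed.
Lemma mulZl a x y : cl_mul (cls a x) y = cls a (cl_mul x y).
Proof.
apply/ffunP => C; rewrite clsE !mulE mulr_sumr; apply eq_bigr => A _.
rewrite mulr_sumr; apply eq_bigr => B _; rewrite ?clsE.
by case: ifP => _; [ring | rewrite mulr0].
Qed.
Lemma mulZr a x y : cl_mul x (cls a y) = cls a (cl_mul x y).
Proof.
apply/ffunP => C; rewrite clsE !mulE mulr_sumr; apply eq_bigr => A _.
rewrite mulr_sumr; apply eq_bigr => B _; rewrite ?clsE.
by case: ifP => _; [ring | rewrite mulr0].
Qed.
Lemma clsA a b x : cls a (cls b x) = cls (a * b) x.
Proof. by apply/ffunP => A; rewrite !clsE mulrA. Qed.
Lemma cls1 x : cls 1 x = x.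
Proof. by apply/ffunP => A; rewrite !clsE mul1r. Qed.
Lemma cls_one_mul a x : cl_mul (cls a one) x = cls a x.
Proof. by rewrite mulZl mul1x. Qed.

Lemma vecE (u : 'cV[R]_n) A : cl_vec u A = \sum_i u i 0 * (A == [set i])%:R.
Proof. by rewrite ffunE. Qed.

Lemma vec1 (u : 'cV[R]_n) (i : 'I_n) : cl_vec u [set i] = u i 0.
Proof.
rewrite vecE (bigD1 i) //= eqxx mulr1 big1 ?addr0 // => j hj.
by rewrite (inj_eq set1_inj) eq_sym (negPf hj) mulr0.
Qed.

Lemma vec_sum (u : 'cV[R]_n) (G : {set 'I_n} -> R) :
  \sum_A cl_vec u A * G A = \sum_i u i 0 * G [set i].
Proof.
under eq_bigr do rewrite vecE mulr_suml.
rewrite exchange_big; apply eq_bigr => i _.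
rewrite -(sum_if_eq (fun A => u i 0 * G A)); apply eq_bigr => A _.
by case: eqP => _; rewrite ?mulr1 ?mulr0 ?mul0r.
Qed.

Lemma vec_mul_l (u : 'cV[R]_n) y C : cl_mul (cl_vec u) y C =
  \sum_i \sum_B (if sd [set i] B == C then sg [set i] B * u i 0 * y B else 0).
Proof.
rewrite mulE.
rewrite (eq_bigr (fun A => cl_vec u A *
   \sum_B (if sd A B == C then sg A B * y B else 0))); last first.
  move=> A _; rewrite mulr_sumr; apply eq_bigr => B _.
  by case: ifP => _; [ring | rewrite mulr0].
rewrite vec_sum; apply eq_bigr => i _; rewrite mulr_sumr; apply eq_bigr => B _.
by case: ifP => _; [ring | rewrite mulr0].
Qed.

Lemma vec_mul_r (u : 'cV[R]_n) x C : cl_mul x (cl_vec u) C =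
  \sum_A \sum_i (if sd A [set i] == C then sg A [set i] * x A * u i 0 else 0).
Proof.
rewrite mulE; apply eq_bigr => A _.
rewrite (eq_bigr (fun B => cl_vec u B *
   (if sd A B == C then sg A B * x A else 0))); last first.
  by move=> B _; case: ifP => _; [ring | rewrite mulr0].
rewrite vec_sum; apply eq_bigr => i _.
by case: ifP => _; [ring | rewrite mulr0].
Qed.

Lemma sg_r1 X (a : 'I_n) : sg X [set a] = \prod_i sgn ((i \in X) && (a <= i)%N).
Proof.
apply eq_bigr => i _.
rewrite (eq_bigr (fun j : 'I_n => sgn (((i \in X) && (j <= i)%N) && (j == a)))).
  by rewrite (@prod_sgn_pred1 R n a (fun j => (i \in X) && (j <= i)%N)).
move=> j _; rewrite inE; congr sgn.
by case: (i \in X); case: (j == a); case: (j <= i)%N.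
Qed.

Lemma sg_1l X (a : 'I_n) : sg [set a] X = \prod_j sgn ((j \in X) && (j <= a)%N).
Proof.
rewrite /sg exchange_big /=; apply eq_bigr => j _.
rewrite (eq_bigr (fun i : 'I_n => sgn (((j \in X) && (j <= i)%N) && (i == a)))).
  by rewrite (@prod_sgn_pred1 R n a (fun i => (j \in X) && (j <= i)%N)).
move=> i _; rewrite inE; congr sgn.
by case: (i == a); case: (j \in X); case: (j <= i)%N.
Qed.

Lemma sg11 (i j : 'I_n) : sg [set i] [set j] = sgn (j <= i)%N.
Proof.
rewrite sg_r1 (eq_bigr (fun k : 'I_n => sgn ((j <= k)%N && (k == i)))).
  by rewrite (@prod_sgn_pred1 R n i (fun k => (j <= k)%N)).
by move=> k _; rewrite inE andbC.
Qed.

Lemma sd11 (i : 'I_n) : sd [set i] [set i] = set0.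
Proof. exact: sdv. Qed.

Definition ip (u w : 'cV[R]_n) : R := \sum_i u i 0 * w i 0.

Lemma anticomm (u w : 'cV[R]_n) :
  cladd (cl_mul (cl_vec u) (cl_vec w)) (cl_mul (cl_vec w) (cl_vec u)) =
  cls (-2 * ip u w) one.
Proof.
have key : forall (a b : 'cV[R]_n) C, cl_mul (cl_vec a) (cl_vec b) C =
   \sum_i \sum_j (if sd [set i] [set j] == C then sgn (j <= i)%N * a i 0 * b j 0 else 0).
  move=> a b C; rewrite vec_mul_l; apply eq_bigr => i _.
  rewrite (eq_bigr (fun B => cl_vec b B *
    (if sd [set i] B == C then sg [set i] B * a i 0 else 0))); last first.
    by move=> B _; case: ifP => _; [ring | rewrite mulr0].
  rewrite vec_sum; apply eq_bigr => j _; rewrite sg11.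
  by case: ifP => _; [ring | rewrite mulr0].
apply/ffunP => C; rewrite claddE clsE oneE !key.
rewrite [X in _ + X]exchange_big /= -big_split /=.
rewrite /ip mulr_sumr mulr_suml; apply eq_bigr => i _.
rewrite -big_split /= (bigD1 i) //= big1 ?addr0.
  rewrite sd11 [set0 == C]eq_sym; case: ifP => _; last by rewrite addr0 /= mulr0.
  by rewrite leqnn /sgn /= mulr1; ring.
move=> j hj; rewrite [sd [set j] [set i]]sdC; case: ifP => _; last by rewrite addr0.
have : (nat_of_ord j != nat_of_ord i) by [].
case: (ltngtP j i) => // h _; rewrite /sgn /=; ring.
Qed.

Lemma vec_sq (u : 'cV[R]_n) :
  cl_mul (cl_vec u) (cl_vec u) = cls (- ip u u) one.
Proof.
have := anticomm u u => /ffunP h; apply/ffunP => C; have := h C.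
rewrite claddE clsE => e.
have : 2 * cl_mul (cl_vec u) (cl_vec u) C = 2 * (- ip u u * one C).
  by rewrite mulr_natl mulr2n e; ring.
move=> h2; rewrite clsE; apply: (mulfI _ h2); by rewrite pnatr_eq0.
Qed.

End Cliff2.
Section Cliff3.
Variable R : realType.
Variable n : nat.
Implicit Types A B C D E F X : {set 'I_n}.
Local Notation sgn := (@sgn R).
Local Notation sg := (@sg R n).
Local Notation sd := (@sd n).
Local Notation CL := (Cl R n).
Local Notation one := (cl_one R n).
Implicit Types x y z w : CL.

Lemma alphaE x A : cl_alpha x A = (-1) ^+ #|A| * x A. Proof. by rewrite ffunE. Qed.
Lemma conjE x A : cl_conj x A = (-1) ^+ (#|A| + 'C(#|A|, 2)) * x A. Proof. by rewrite ffunE. Qed.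

Lemma signD A B : (-1) ^+ #|sd A B| = (-1) ^+ #|A| * (-1) ^+ #|B| :> R.
Proof. by rewrite -!(@parE R n) parD. Qed.

Lemma alpha_mul x y : cl_alpha (cl_mul x y) = cl_mul (cl_alpha x) (cl_alpha y).
Proof.
apply/ffunP => C; rewrite alphaE !mulE mulr_sumr; apply eq_bigr => A _.
rewrite mulr_sumr; apply eq_bigr => B _; rewrite !alphaE.
by case: ifP => [/eqP <-|_]; [rewrite signD; ring | rewrite mulr0].
Qed.

Lemma alpha_vec (u : 'cV[R]_n) : cl_alpha (cl_vec u) = cls (-1) (cl_vec u).
Proof.
apply/ffunP => A; rewrite alphaE clsE !vecE !mulr_sumr; apply eq_bigr => i _.
by case: eqP => [->|_]; rewrite ?cards1 ?expr1 ?mulr0 //.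
Qed.

Lemma alpha_one : cl_alpha one = one.
Proof.
by apply/ffunP => A; rewrite alphaE oneE; case: eqP => [->|_]; rewrite ?cards0 ?expr0 ?mulr1 ?mulr0.
Qed.

Lemma alpha_cls a x : cl_alpha (cls a x) = cls a (cl_alpha x).
Proof. by apply/ffunP => A; rewrite !(alphaE, clsE); ring. Qed.

Lemma sdD1 A a : a \in A -> A = sd (A :\ a) [set a].
Proof.
move=> aA; apply/setP => i; rewrite in_sd !inE.
by case: (i =P a) => [->|_]; rewrite ?aA //= addbF.
Qed.

Lemma sg_a_notin X (a : 'I_n) : a \notin X -> sg X [set a] * sg [set a] X = (-1) ^+ #|X|.
Proof.
move=> aX; rewrite sg_r1 sg_1l -big_split /= -(@parE R n); apply eq_bigr => i _ /=.
rewrite -sgnX; congr sgn.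
case: (i =P a) => [->|/eqP hia]; first by rewrite (negPf aX).
have : (nat_of_ord i != nat_of_ord a) by [].
by case: (i \in X); case: (ltngtP a i).
Qed.

Lemma ccE A : (-1) ^+ (#|A| + 'C(#|A|, 2)) = sg A A.
Proof.
elim: {A}#|A|.+1 {-2}A (ltnSn #|A|) => // k IH A hA.
case: (set_0Vmem A) => [->|[a aA]].
  by rewrite cards0 bin0n expr0 sg0l.
have aA' : a \notin A :\ a by rewrite !inE eqxx.
have hc : #|A| = (#|A :\ a|).+1 by rewrite (cardsD1 a A) aA.
have IH' := IH (A :\ a); rewrite -hc in IH'; have {}IH' := IH' hA.
have -> : sg A A = sg (sd (A :\ a) [set a]) (sd (A :\ a) [set a]) by rewrite -sdD1.
rewrite sgDl !sgDr sg11 leqnn hc binS bin1.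
have e := sg_a_notin aA'.
have -> : sg (A :\ a) (A :\ a) * sg (A :\ a) [set a] * (sg [set a] (A :\ a) * sgn true) =
          sg (A :\ a) (A :\ a) * (sg (A :\ a) [set a] * sg [set a] (A :\ a)) * sgn true by ring.
by rewrite e -IH' /sgn !exprS !exprD; ring.
Qed.

Lemma cc2 A : sg A A * sg A A = 1.
Proof. exact: (@sg2 R n). Qed.

Lemma conj_mul x y : cl_conj (cl_mul x y) = cl_mul (cl_conj y) (cl_conj x).
Proof.
apply/ffunP => C; rewrite conjE mulE [RHS]mulE [RHS]exchange_big mulr_sumr; apply eq_bigr => A _.
rewrite mulr_sumr; apply eq_bigr => B _; rewrite !conjE [sd B A]sdC.
case: ifP => [/eqP <-|_]; last by rewrite mulr0.
rewrite !ccE sgDl !sgDr.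
have h := @sg2 R n A B.
transitivity ((sg A B * sg A B) * (sg B A * sg A A * sg B B * x A * y B)); first by ring.
by rewrite h; ring.
Qed.

Lemma conj_vec (u : 'cV[R]_n) : cl_conj (cl_vec u) = cls (-1) (cl_vec u).
Proof.
apply/ffunP => A; rewrite conjE clsE !vecE !mulr_sumr; apply eq_bigr => i _.
case: eqP => [->|_]; last by rewrite !mulr0.
by rewrite cards1 (_ : 'C(1,2) = 0%N) // addn0 expr1 !mulr1.
Qed.

Lemma conj_one : cl_conj one = one.
Proof.
by apply/ffunP => A; rewrite conjE oneE; case: eqP => [->|_]; rewrite ?cards0 ?bin0n ?expr0 ?mulr1 ?mulr0.
Qed.

Lemma conj_cls a x : cl_conj (cls a x) = cls a (cl_conj x).
Proof. by apply/ffunP => A; rewrite !(conjE, clsE); ring. Qed.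

Lemma conjK x : cl_conj (cl_conj x) = x.
Proof. by apply/ffunP => A; rewrite !conjE mulrA -expr2 sqrr_sign mul1r. Qed.

End Cliff3.
Section Pin.
Variable R : realType.
Variable n : nat.
Implicit Types A B C D E F X : {set 'I_n}.
Local Notation sgn := (@sgn R).
Local Notation sg := (@sg R n).
Local Notation sd := (@sd n).
Local Notation CL := (Cl R n).
Local Notation one := (cl_one R n).
Local Notation cls := (@cls R n).
Local Notation cladd := (@cladd R n).
Local Notation ip := (@ip R n).
Implicit Types x y z : CL.
Implicit Types s : seq 'cV[R]_n.
Implicit Types u v w : 'cV[R]_n.

Definition prodv s : CL := foldr (@cl_mul R n) one (map (@cl_vec R n) s).
Definition units s := forall v, v \in s -> unit_vector v.
Definition Hm u : 'M[R]_n := 1%:M - 2 *: (u *m u^T).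
Definition Ms s : 'M[R]_n := foldr (fun u M => Hm u *m M) 1%:M s.

Lemma prodv_cons u s : prodv (u :: s) = cl_mul (cl_vec u) (prodv s).
Proof. by []. Qed.

Lemma prodv_cat s1 s2 : prodv (s1 ++ s2) = cl_mul (prodv s1) (prodv s2).
Proof.
elim: s1 => [|u s1 IH]; first by rewrite cat0s /prodv /= mul1x.
by rewrite cat_cons !prodv_cons IH mulA.
Qed.

Lemma prodv1 u : prodv [:: u] = cl_vec u.
Proof. by rewrite prodv_cons mulx1. Qed.

Lemma Ms_cat s1 s2 : Ms (s1 ++ s2) = Ms s1 *m Ms s2.
Proof.
elim: s1 => [|u s1 IH]; first by rewrite cat0s /= mul1mx.
by rewrite cat_cons /= -/(Ms (s1 ++ s2)) IH mulmxA.
Qed.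

Lemma ipE u w : (u^T *m w) 0 0 = ip u w.
Proof. by rewrite mxE; apply eq_bigr => i _; rewrite mxE. Qed.

Lemma unitE u : unit_vector u <-> ip u u = 1.
Proof. by rewrite /unit_vector ipE. Qed.

Lemma mul_scal1 u w : u *m (u^T *m w) = ip u w *: u.
Proof.
apply/matrixP => i j; rewrite !mxE big_ord1 (ord1 j) -ipE.
by rewrite mulrC.
Qed.

Lemma Hm_mul u w : Hm u *m w = w - (2 * ip u w) *: u.
Proof.
by rewrite /Hm mulmxBl mul1mx -scalemxAl -mulmxA mul_scal1 scalerA.
Qed.

Lemma vec_lin u w c : cl_vec (w - c *: u) = cladd (cl_vec w) (cls (- c) (cl_vec u)).
Proof.
apply/ffunP => A; rewrite claddE clsE !vecE mulr_sumr -big_split /=.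
by apply eq_bigr => i _; rewrite !mxE; ring.
Qed.

Lemma vec_opp u : cl_vec (- u) = cls (-1) (cl_vec u).
Proof.
apply/ffunP => A; rewrite clsE !vecE mulr_sumr.
by apply eq_bigr => i _; rewrite !mxE; ring.
Qed.

Lemma uwu u w : unit_vector u ->
  cl_mul (cl_mul (cl_vec u) (cl_vec w)) (cl_vec u) = cl_vec (Hm u *m w).
Proof.
move/unitE => hu.
have e1 : cl_mul (cl_vec u) (cl_vec w) =
   cladd (cls (-2 * ip u w) one) (cls (-1) (cl_mul (cl_vec w) (cl_vec u))).
  have /ffunP h := anticomm u w; apply/ffunP => A; have := h A.
  rewrite !claddE !clsE => <-; ring.
have e2 : cl_mul (cl_mul (cl_vec w) (cl_vec u)) (cl_vec u) = cls (-1) (cl_vec w).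
  by rewrite mulA vec_sq hu mulZr mulx1.
rewrite e1 mulDl !mulZl mul1x e2 Hm_mul vec_lin.
apply/ffunP => A; rewrite !claddE !clsE; ring.
Qed.

Definition Tm x v := cl_mul (cl_mul (cl_alpha x) (cl_vec v)) (cl_conj x).

Lemma Tm_prodv s : units s -> forall v, Tm (prodv s) v = cl_vec (Ms s *m v).
Proof.
elim: s => [|u s IH] hs v.
  by rewrite /Tm /= alpha_one conj_one mul1x mulx1 mul1mx.
have hu : unit_vector u by apply: hs; rewrite inE eqxx.
have hs' : units s by move=> w hw; apply: hs; rewrite inE hw orbT.
rewrite /Tm prodv_cons alpha_mul conj_mul alpha_vec conj_vec.
rewrite !(mulZl, mulZr) clsA mulrNN mulr1 cls1.
have -> : cl_mul (cl_mul (cl_mul (cl_vec u) (cl_alpha (prodv s))) (cl_vec v))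
     (cl_mul (cl_conj (prodv s)) (cl_vec u)) =
   cl_mul (cl_mul (cl_vec u) (Tm (prodv s) v)) (cl_vec u) by rewrite /Tm !mulA.
by rewrite IH // uwu // /= mulmxA.
Qed.

Lemma rho_prodv s : units s -> rho (prodv s) = Ms s.
Proof.
move=> hs; apply/matrixP => i j; rewrite mxE.
rewrite -/(Tm (prodv s) (delta_mx j 0)) Tm_prodv // vec1 -colE.
by rewrite mxE.
Qed.

Lemma conj_prodv s : cl_conj (prodv s) = prodv (rev (map (fun u => - u) s)).
Proof.
elim: s => [|u s IH]; first by rewrite /= conj_one.
rewrite prodv_cons conj_mul IH conj_vec map_cons rev_cons -cats1 prodv_cat prodv1.
by rewrite vec_opp.
Qed.

Lemma units_rev s : units s -> units (rev (map (fun u => - u) s)).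
Proof.
move=> hs v; rewrite mem_rev => /mapP [u hu ->].
have := hs u hu; rewrite !unitE /ip => <-; apply eq_bigr => i _; rewrite !mxE; ring.
Qed.

Lemma prodv_inv s : units s -> cl_mul (prodv s) (cl_conj (prodv s)) = one.
Proof.
elim: s => [|u s IH] hs; first by rewrite /= conj_one mul1x.
have hu : unit_vector u by apply: hs; rewrite inE eqxx.
have hs' : units s by move=> w hw; apply: hs; rewrite inE hw orbT.
rewrite prodv_cons conj_mul conj_vec !mulZr.
have -> : cl_mul (cl_mul (cl_vec u) (prodv s)) (cl_mul (cl_conj (prodv s)) (cl_vec u)) =
  cl_mul (cl_vec u) (cl_mul (cl_mul (prodv s) (cl_conj (prodv s))) (cl_vec u)) by rewrite !mulA.
by rewrite IH // mul1x vec_sq (proj1 (unitE u) hu) !clsA mulrNN mulr1 cls1.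
Qed.

Lemma conj_prodv_inv s : units s -> cl_mul (cl_conj (prodv s)) (prodv s) = one.
Proof.
move=> hs; have := prodv_inv (units_rev hs).
by rewrite -conj_prodv conjK.
Qed.

Lemma Hm_opp u : Hm (- u) = Hm u.
Proof. by rewrite /Hm linearN /= mulmxN mulNmx opprK. Qed.

Lemma Hm_tr u : (Hm u)^T = Hm u.
Proof. by rewrite /Hm linearB /= linearZ /= trmx1 trmx_mul trmxK. Qed.

Lemma utu u : unit_vector u -> u^T *m u = 1%:M.
Proof.
move=> hu; apply/matrixP => i j; rewrite (ord1 i) (ord1 j).
by rewrite hu mxE.
Qed.

Lemma Hm_invol u : unit_vector u -> Hm u *m Hm u = 1%:M.
Proof.
move=> hu.
have PP : (u *m u^T) *m (u *m u^T) = u *m u^T by rewrite mulmxA -(mulmxA u) utu // mulmx1.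
rewrite /Hm mulmxBl !mulmxBr mul1mx mulmx1 -!scalemxAl -!scalemxAr PP scalerA.
rewrite !mul1mx.
by apply/matrixP => i j; rewrite !mxE; ring.
Qed.

Lemma Ms_inv s : units s -> Ms s *m Ms (rev (map (fun u => - u) s)) = 1%:M.
Proof.
elim: s => [|u s IH] hs; first by rewrite /= mulmx1.
have hu : unit_vector u by apply: hs; rewrite inE eqxx.
have hs' : units s by move=> w hw; apply: hs; rewrite inE hw orbT.
rewrite map_cons rev_cons -cats1 Ms_cat /= -/(Ms s) mulmx1 Hm_opp.
by rewrite -mulmxA (mulmxA (Ms s)) IH // mul1mx Hm_invol.
Qed.

End Pin.
Section Kernel.
Variable R : realType.
Variable n : nat.
Implicit Types A B C D E F X : {set 'I_n}.
Local Notation sgn := (@sgn R).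
Local Notation sg := (@sg R n).
Local Notation sd := (@sd n).
Local Notation CL := (Cl R n).
Local Notation one := (cl_one R n).
Local Notation cls := (@cls R n).
Implicit Types x y z : CL.
Implicit Types s : seq 'cV[R]_n.

Lemma mul_delta_r x (i : 'I_n) C : cl_mul x (cl_vec (delta_mx i 0)) C =
  \sum_A (if sd A [set i] == C then sg A [set i] * x A else 0).
Proof.
rewrite vec_mul_r; apply eq_bigr => A _.
rewrite (bigD1 i) //= [X in _ + X]big1 ?addr0.
  by rewrite mxE !eqxx /= mulr1.
by move=> k hk; rewrite mxE (negPf hk) /= mulr0; case: ifP.
Qed.

Lemma mul_delta_l x (i : 'I_n) C : cl_mul (cl_vec (delta_mx i 0)) x C =
  \sum_B (if sd [set i] B == C then sg [set i] B * x B else 0).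
Proof.
rewrite vec_mul_l (bigD1 i) //= [X in _ + X]big1 ?addr0.
  by apply eq_bigr => B _; rewrite mxE !eqxx /= mulr1.
move=> k hk; apply big1 => B _; rewrite mxE (negPf hk) /= mulr0 mul0r.
by case: ifP.
Qed.

Lemma sg_a_in X (a : 'I_n) : a \in X -> sg X [set a] * sg [set a] X = - (-1) ^+ #|X|.
Proof.
move=> aX; rewrite sg_r1 sg_1l -big_split /= -(@parE R n).
have -> : - par R X = par R X * \prod_(i : 'I_n) sgn (true && (i == a)).
  by rewrite (@prod_sgn_pred1 R n a predT) /= /sgn mulrN1.
rewrite /par -big_split /=; apply eq_bigr => i _ /=.
rewrite -!sgnX; congr sgn.
case: (i =P a) => [->|/eqP hia]; first by rewrite aX leqnn.
have : (nat_of_ord i != nat_of_ord a) by [].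
by case: (i \in X); case: (ltngtP a i).
Qed.

Lemma kernel s : units s -> Ms s = 1%:M -> prodv s = one \/ prodv s = cls (-1) one.
Proof.
move=> hs hM; set z := prodv s.
have hT : forall v, Tm z v = cl_vec v by move=> v; rewrite Tm_prodv // hM mul1mx.
have hcz : cl_mul (cl_conj z) z = one := conj_prodv_inv hs.
have hcom : forall v, cl_mul (cl_alpha z) (cl_vec v) = cl_mul (cl_vec v) z.
  by move=> v; rewrite -[in RHS](hT v) /Tm mulA hcz mulx1.
have h0 : forall A, A != set0 -> z A = 0.
  move=> A /set0Pn [i iA].
  have /ffunP := hcom (delta_mx i 0) => /(_ (sd A [set i])).
  rewrite mul_delta_r mul_delta_l.
  rewrite (eq_bigr (fun B => if B == A then sg B [set i] * cl_alpha z B else 0)); last first.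
    by move=> B _; rewrite [sd B _]sdC [sd A _]sdC sdK.
  rewrite sum_if_eq.
  rewrite (eq_bigr (fun B => if B == A then sg [set i] B * z B else 0)); last first.
    by move=> B _; rewrite [sd A _]sdC sdK.
  rewrite sum_if_eq alphaE => e.
  have e' : (sg A [set i] * sg A [set i]) * ((-1) ^+ #|A| * z A) =
            (sg A [set i] * sg [set i] A) * z A by rewrite -!mulrA e.
  rewrite (@sg2 R n) sg_a_in // mul1r mulNr in e'.
  have : 2 * ((-1) ^+ #|A| * z A) = 0 by rewrite mulr_natl mulr2n {1}e' addNr.
  by move/eqP; rewrite !mulf_eq0 pnatr_eq0 signr_eq0 /= => /eqP.
set c := z set0.
have hz : z = cls c one.
  apply/ffunP => A; rewrite clsE oneE; case: eqP => [->|/eqP h]; first by rewrite mulr1.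
  by rewrite mulr0 h0.
have hzc := prodv_inv hs; rewrite -/z in hzc.
rewrite hz conj_cls conj_one mulZl mulZr mul1x clsA in hzc.
have := congr1 (fun x => x set0) hzc; rewrite /= clsE oneE eqxx mulr1 => hc.
have : c ^+ 2 == 1 by rewrite expr2 hc.
rewrite sqrf_eq1 => /orP [/eqP c1 | /eqP c2].
  by left; rewrite hz c1 cls1.
by right; rewrite hz c2.
Qed.

End Kernel.
Section CD.
Variable R : realType.
Variable n : nat.
Local Notation ip := (@ip R n).
Local Notation Hm := (@Hm R n).
Local Notation Ms := (@Ms R n).
Local Notation units := (@units R n).
Implicit Types a b c u v w : 'cV[R]_n.

Lemma ipC a b : ip a b = ip b a.
Proof. by apply eq_bigr => i _; rewrite mulrC. Qed.
Lemma ipBl a b c : ip (a - b) c = ip a c - ip b c.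
Proof. by rewrite /ip -sumrB; apply eq_bigr => i _; rewrite !mxE; ring. Qed.
Lemma ipBr a b c : ip c (a - b) = ip c a - ip c b.
Proof. by rewrite ipC ipBl ipC (ipC b). Qed.
Lemma ipZl (r : R) a b : ip (r *: a) b = r * ip a b.
Proof. by rewrite /ip mulr_sumr; apply eq_bigr => i _; rewrite !mxE; ring. Qed.
Lemma ipZr (r : R) a b : ip b (r *: a) = r * ip b a.
Proof. by rewrite ipC ipZl ipC. Qed.
Lemma ip_ge0 a : 0 <= ip a a.
Proof. by apply: sumr_ge0 => i _; rewrite -expr2 sqr_ge0. Qed.
Lemma ip_eq0 a : ip a a = 0 -> a = 0.
Proof.
move=> h; apply/matrixP => i j; rewrite (ord1 j) mxE.
have h2 : forall k, a k 0 * a k 0 = 0.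
  by move=> k; apply: (psumr_eq0P _ h) => // m _; rewrite -expr2 sqr_ge0.
by move/eqP: (h2 i); rewrite mulf_eq0 orbb => /eqP.
Qed.
Lemma ip_col (A : 'M[R]_n) i j : ip (col i A) (col j A) = (A^T *m A) i j.
Proof. by rewrite mxE; apply eq_bigr => k _; rewrite !mxE. Qed.
Lemma ip_e1 (k : 'I_n) v : ip (col k 1%:M) v = v k 0.
Proof.
rewrite /ip (bigD1 k) //= big1 ?addr0; first by rewrite !mxE eqxx mul1r.
by move=> m hm; rewrite !mxE (negPf hm) mul0r.
Qed.

Lemma CD_aux k : forall A : 'M[R]_n, A *m A^T = 1%:M ->
  (forall j : 'I_n, (k <= j)%N -> col j A = col j 1%:M) ->
  exists s, units s /\ Ms s = A.
Proof.
elim: k => [|k IH] A hA hcol.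
  exists [::]; split => //=; apply/matrixP => i j.
  by have := congr1 (fun M : 'M[R]_(n,1) => M i 0) (hcol j (leq0n _)); rewrite !mxE.
have hAt : A^T *m A = 1%:M by apply: mulmx1C.
case: (ltnP k n) => hk; last first.
  apply: IH => // j hj; exfalso.
  by have := leq_trans hk hj; rewrite leqNgt ltn_ord.
set kk := Ordinal hk.
set a := col kk A; set ek := col kk (1%:M : 'M[R]_n).
case: (eqVneq a ek) => hae.
  apply: IH => // j hj.
  case: (eqVneq (nat_of_ord j) k) => [ejk|njk].
    by have -> : j = kk by apply: val_inj.
  by apply: hcol; rewrite ltn_neqAle eq_sym njk hj.
set w := a - ek; set N := ip w w.
have hN : N != 0.
  apply/eqP => /ip_eq0 /eqP; rewrite subr_eq0 => /eqP h.
  by rewrite h eqxx in hae.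
have hN0 : 0 < N by rewrite lt_def hN ip_ge0.
set u := (Num.sqrt N)^-1 *: w.
have hu : unit_vector u.
  apply/unitE; rewrite ipZl ipZr -/N mulrA -expr2 exprVn sqr_sqrtr ?ltW //.
  by rewrite mulVf.
have haa : ip a a = 1 by rewrite ip_col hAt mxE eqxx.
have hek : ip ek ek = 1 by rewrite ip_e1 !mxE eqxx.
have hae' : ip a ek = ip ek a by rewrite ipC.
set B := Hm u *m A.
have hB : B *m B^T = 1%:M.
  rewrite /B trmx_mul Hm_tr mulmxA -(mulmxA (Hm u)) hA mulmx1.
  exact: Hm_invol.
have hcolB : forall j : 'I_n, (k <= j)%N -> col j B = col j 1%:M.
  move=> j hj; rewrite /B colE -mulmxA -colE Hm_mul.
  case: (eqVneq (nat_of_ord j) k) => [ejk|njk].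
    have -> : j = kk by apply: val_inj.
    rewrite -/a -/ek /u ipZl scalerA.
    have hw2 : 2 * ip w a = N.
      rewrite /N /w !ipBl !ipBr haa hek hae'; ring.
    have hs : Num.sqrt N != 0 by rewrite sqrtr_eq0 -ltNge.
    have -> : 2 * ((Num.sqrt N)^-1 * ip w a) * (Num.sqrt N)^-1 = 1.
      have e : 2 * ((Num.sqrt N)^-1 * ip w a) * (Num.sqrt N)^-1 =
               (2 * ip w a) / (Num.sqrt N * Num.sqrt N) by rewrite invfM; ring.
      by rewrite e hw2 -expr2 sqr_sqrtr ?ltW // mulfV.
    by rewrite scale1r /w opprB addrCA subrr addr0.
  have hkj : (k < j)%N by rewrite ltn_neqAle eq_sym njk hj.
  rewrite (hcol j hkj) /u ipZl.
  have -> : ip w (col j 1%:M) = 0.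
    rewrite /w ipBl -(hcol j hkj) /a /ek ip_col hAt ip_e1 (hcol j hkj).
    rewrite !mxE.
    have hne : (kk == j) = false.
      by apply/negP => /eqP e; move: njk; rewrite -e eqxx.
    by rewrite hne /= subrr.
  by rewrite mulr0 mulr0 scale0r subr0.
have [s [hs hMs]] := IH B hB hcolB.
exists (u :: s); split.
  by move=> v; rewrite inE => /orP [/eqP ->|]; [exact: hu | exact: hs].
by rewrite /= -/(Ms s) hMs /B mulmxA Hm_invol // mul1mx.
Qed.

Lemma CD (A : 'M[R]_n) : A *m A^T = 1%:M -> exists s, units s /\ Ms s = A.
Proof.
move=> hA; apply: (CD_aux (k := n)) => // j.
by rewrite leqNgt ltn_ord.
Qed.

End CD.
Section Phi.
Variable R : realType.
Variable n : nat.
Local Notation N1 := (n + 1)%N.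
Implicit Types A B X : {set 'I_n}.
Implicit Types C D E : {set 'I_N1}.
Local Notation sgn := (@sgn R).

Definition nn : 'I_N1 := rshift n (ord0 : 'I_1).
Definition lsh (a : 'I_n) : 'I_N1 := lshift 1 a.

Lemma split_lsh a : split (lsh a) = inl a.
Proof. exact: (unsplitK (inl _ a)). Qed.
Lemma split_nn : split nn = inr ord0.
Proof. exact: (unsplitK (inr _ ord0)). Qed.
Lemma lsh_inj : injective lsh.
Proof. by move=> a b /(congr1 split); rewrite !split_lsh => -[]. Qed.
Lemma lsh_nn a : (lsh a == nn) = false.
Proof. by apply/negP => /eqP/(congr1 split); rewrite split_lsh split_nn. Qed.

Definition Phiset A : {set 'I_N1} :=
  [set i : 'I_N1 | if split i is inl j then j \in A else odd #|A|].
Definition pre C : {set 'I_n} := [set j | lsh j \in C].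

Lemma mem_lsh a A : (lsh a \in Phiset A) = (a \in A).
Proof. by rewrite inE split_lsh. Qed.
Lemma mem_nn A : (nn \in Phiset A) = odd #|A|.
Proof. by rewrite inE split_nn. Qed.

Lemma card_split C : #|C| = (#|pre C| + (nn \in C))%N.
Proof.
rewrite -!sum1_card [in LHS]big_mkcond /= big_split_ord /= big_ord1.
rewrite [in RHS]big_mkcond /=; congr (_ + _)%N.
by apply eq_bigr => j _; rewrite inE.
Qed.

Lemma pre_Phiset A : pre (Phiset A) = A.
Proof. by apply/setP => a; rewrite inE mem_lsh. Qed.

Lemma card_Phiset A : #|Phiset A| = (#|A| + odd #|A|)%N.
Proof. by rewrite card_split pre_Phiset mem_nn. Qed.

Lemma odd_Phiset A : odd #|Phiset A| = false.
Proof. by rewrite card_Phiset oddD; case: odd. Qed.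

Lemma elimN1 (P : 'I_N1 -> Prop) : (forall a, P (lsh a)) -> P nn -> forall i, P i.
Proof.
move=> h1 h2 i; rewrite -(splitK i); case: (split i) => [j|k].
  exact: h1.
by rewrite (ord1 k); exact: h2.
Qed.

Lemma Phiset_pre C : ~~ odd #|C| -> Phiset (pre C) = C.
Proof.
move=> hC; apply/setP; apply: elimN1 => [a|]; first by rewrite mem_lsh inE.
rewrite mem_nn; move: hC; rewrite card_split oddD.
by case: (nn \in C); case: odd.
Qed.

Lemma Phiset_eq X D : (Phiset X == D) = ~~ odd #|D| && (pre D == X).
Proof.
apply/eqP/andP => [<-|[h /eqP <-]]; last exact: Phiset_pre.
by rewrite odd_Phiset pre_Phiset.
Qed.

Lemma Phiset_inj : injective Phiset.
Proof. by move=> A B h; rewrite -(pre_Phiset A) h pre_Phiset. Qed.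

Lemma Phiset_sd A B : sd (Phiset A) (Phiset B) = Phiset (sd A B).
Proof.
apply/setP; apply: elimN1 => [a|]; first by rewrite in_sd !mem_lsh in_sd.
by rewrite in_sd !mem_nn odd_sd.
Qed.

Lemma Phiset0 : Phiset set0 = set0.
Proof.
apply/setP; apply: elimN1 => [a|]; first by rewrite mem_lsh !inE.
by rewrite mem_nn cards0 inE.
Qed.

Lemma sg_Phi A B : sg R (Phiset A) (Phiset B) = sg R A B.
Proof.
rewrite /sg big_split_ord /= big_ord1 -/nn.
have e1 : forall a : 'I_n, \prod_(j < N1) sgn [&& lsh a \in Phiset A, j \in Phiset B & (j <= lsh a)%N]
    = \prod_(b < n) sgn [&& a \in A, b \in B & (b <= a)%N].
  move=> a; rewrite big_split_ord /= big_ord1 -/nn.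
  have -> : (n + @nat_of_ord 1 ord0 <= a)%N = false.
    by rewrite /= addn0 leqNgt ltn_ord.
  rewrite !andbF /= mulr1; apply eq_bigr => b _.
  by rewrite -[lshift 1 b]/(lsh b) !mem_lsh.
under eq_bigr => a _ do rewrite -[lshift 1 a]/(lsh a) e1.
rewrite big_split_ord /= big_ord1 -/nn.
have -> : \prod_(i < n) sgn [&& nn \in Phiset A, lshift 1 i \in Phiset B & (lshift 1 i <= nn)%N]
   = sgn (odd #|A| && odd #|B|).
  rewrite mem_nn; case: (odd #|A|) => /=; last by rewrite big1.
  rewrite -(@par_odd R n) /par; apply eq_bigr => b _.
  by rewrite -[lshift 1 b]/(lsh b) mem_lsh /= addn0 (ltnW (ltn_ord b)) andbT.
rewrite !mem_nn leqnn andbT sgn2 mulr1.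
by [].
Qed.

Definition Phi (x : Cl R n) : Cl R N1 :=
  [ffun C : {set 'I_N1} => if ~~ odd #|C| then x (pre C) else 0].

Lemma PhiE (x : Cl R n) (C : {set 'I_N1}) : Phi x C = if ~~ odd #|C| then x (pre C) else 0.
Proof. by rewrite ffunE. Qed.

Lemma Phi_set (x : Cl R n) (A : {set 'I_n}) : Phi x (Phiset A) = x A.
Proof. by rewrite PhiE odd_Phiset pre_Phiset. Qed.

Lemma Phi_inj : injective Phi.
Proof. by move=> x y h; apply/ffunP => A; rewrite -!Phi_set h. Qed.

Lemma sum_Phi (G : {set 'I_N1} -> R) : (forall C, odd #|C| -> G C = 0) ->
  \sum_C G C = \sum_A G (Phiset A).
Proof.
move=> hG; rewrite (bigID (fun C => ~~ odd #|C|)) /= [X in _ + X]big1 ?addr0; last first.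
  by move=> C; rewrite negbK; apply: hG.
rewrite (reindex_onto Phiset pre) /=; last by move=> C; apply: Phiset_pre.
by apply: eq_bigl => A; rewrite odd_Phiset pre_Phiset eqxx.
Qed.

Lemma Phi_odd (x : Cl R n) C : odd #|C| -> Phi x C = 0.
Proof. by move=> hC; rewrite PhiE hC. Qed.

Lemma Phi_mul (x y : Cl R n) : Phi (cl_mul x y) = cl_mul (Phi x) (Phi y).
Proof.
apply/ffunP => D; rewrite PhiE [RHS]mulE.
rewrite sum_Phi; last first.
  by move=> C hC; apply: big1 => E _; rewrite (Phi_odd x hC) mulr0 mul0r; case: ifP.
transitivity (\sum_A \sum_B (if sd (Phiset A) (Phiset B) == D then
   sg R (Phiset A) (Phiset B) * Phi x (Phiset A) * Phi y (Phiset B) else 0)); last first.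
  apply eq_bigr => A _; rewrite sum_Phi //.
  by move=> E hE; rewrite (Phi_odd y hE) mulr0; case: ifP.
under eq_bigr => A _ do under eq_bigr => B _ do rewrite !Phi_set Phiset_sd sg_Phi Phiset_eq.
case: (odd #|D|) => /=.
  by rewrite big1 // => A _; rewrite big1.
rewrite mulE; apply eq_bigr => A _; apply eq_bigr => B _.
by rewrite eq_sym.
Qed.

Lemma Phi_one : Phi (cl_one R n) = cl_one R N1.
Proof.
apply/ffunP => D; rewrite PhiE !oneE.
have -> : (D == set0) = (Phiset set0 == D) by rewrite Phiset0 eq_sym.
by rewrite Phiset_eq; case: odd.
Qed.

Lemma Phi_cls (a : R) (x : Cl R n) : Phi (cls a x) = cls a (Phi x).
Proof.
apply/ffunP => D; rewrite !(PhiE, clsE); case: ifP => _; by rewrite ?clsE ?mulr0.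
Qed.

End Phi.
Section Lift.
Variable R : realType.
Variable n : nat.
Local Notation N1 := (n + 1)%N.
Local Notation nn := (@nn n).
Local Notation lsh := (@lsh n).
Implicit Types u v : 'cV[R]_n.
Implicit Types s : seq 'cV[R]_n.

Definition en : 'cV[R]_N1 := delta_mx nn 0.
Definition flat s : seq 'cV[R]_N1 := flatten [seq [:: col_mx u 0; en] | u <- s].

Lemma en_col : en = col_mx 0 (1%:M : 'M[R]_1).
Proof.
apply/matrixP; apply: elimN1 => [a|] j; rewrite (ord1 j).
  by rewrite /en mxE lsh_nn /= [lsh a]/(lshift 1 a) col_mxEu mxE.
by rewrite /en mxE !eqxx /= [nn]/(rshift n ord0) col_mxEd mxE.
Qed.

Lemma sd_lsh_nn (a : 'I_n) : sd [set lsh a] [set nn] = Phiset [set a].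
Proof.
apply/setP; apply: elimN1 => [b|].
  by rewrite in_sd mem_lsh !inE (inj_eq (@lsh_inj n)) lsh_nn addbF.
by rewrite in_sd mem_nn cards1 !inE eq_sym lsh_nn eqxx.
Qed.

Lemma Phi_vec u : Phi (cl_vec u) = cl_mul (cl_vec (col_mx u 0)) (cl_vec en).
Proof.
apply/ffunP => D; rewrite mul_delta_r.
rewrite (eq_bigr (fun A => cl_vec (col_mx u 0) A *
   (if sd A [set nn] == D then sg R A [set nn] else 0))); last first.
  by move=> A _; case: ifP => _; [rewrite mulrC | rewrite mulr0].
rewrite vec_sum big_split_ord /= big_ord1 -/nn.
rewrite [nn]/(rshift n ord0) col_mxEd mxE mul0r addr0 -/nn.
rewrite PhiE vecE.
under [RHS]eq_bigr => a _ do rewrite -[lshift 1 a]/(lsh a) col_mxEu sd_lsh_nn sg11 Phiset_eq.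
case: (odd #|D|) => /=; first by rewrite big1 // => a _; rewrite mulr0.
apply eq_bigr => a _.
have -> : (nat_of_ord nn <= lsh a)%N = false by rewrite /= addn0 leqNgt ltn_ord.
by case: (pre D == [set a]); rewrite /sgn ?mulr1 ?mulr0.
Qed.

Lemma unit_lift u : unit_vector u -> unit_vector (col_mx u (0 : 'cV[R]_1)).
Proof. by rewrite /unit_vector tr_col_mx mul_row_col mulmx0 addr0. Qed.

Lemma unit_en : unit_vector en.
Proof.
by rewrite /unit_vector en_col tr_col_mx mul_row_col mulmx0 add0r trmx1 mulmx1 mxE.
Qed.

Lemma units_flat s : units s -> units (flat s).
Proof.
elim: s => [|u s IH] hs //=.
have hu : unit_vector u by apply: hs; rewrite inE eqxx.
have hs' : units s by move=> w hw; apply: hs; rewrite inE hw orbT.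
move=> v; rewrite !inE => /orP [/eqP ->|/orP [/eqP ->|]].
- exact: unit_lift.
- exact: unit_en.
- exact: IH.
Qed.

Lemma Phi_prodv s : Phi (prodv s) = prodv (flat s).
Proof.
elim: s => [|u s IH]; first by rewrite /= Phi_one.
rewrite prodv_cons Phi_mul IH Phi_vec mulA.
by [].
Qed.

Lemma Hm_lift u : Hm (col_mx u (0 : 'cV[R]_1)) = block_mx (Hm u) 0 0 1%:M.
Proof.
rewrite /Hm tr_col_mx mul_col_row trmx0 mulmx0 mul0mx mulmx0.
rewrite [1%:M : 'M[R]_(n + 1)]scalar_mx_block scale_block_mx opp_block_mx add_block_mx.
by rewrite !scaler0 !oppr0 !addr0.
Qed.

Lemma Hm_en : Hm en = block_mx 1%:M 0 0 (-1)%:M.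
Proof.
rewrite /Hm en_col tr_col_mx mul_col_row trmx0 mulmx0 mul0mx mulmx0 trmx1 mulmx1.
rewrite [1%:M : 'M[R]_(n + 1)]scalar_mx_block scale_block_mx opp_block_mx add_block_mx.
rewrite !scaler0 !oppr0 !addr0; congr block_mx.
by apply/matrixP => i j; rewrite (ord1 i) (ord1 j) !mxE /=; ring.
Qed.

Lemma Ms_flat s : Ms (flat s) = block_mx (Ms s) 0 0 ((-1) ^+ size s)%:M.
Proof.
elim: s => [|u s IH].
  by rewrite /= expr0 -scalar_mx_block.
rewrite /= -/(flat s) -/(Ms s) -/(Ms (flat s)) IH Hm_lift Hm_en !mulmx_block.
rewrite !(mul0mx, mulmx0, addr0, add0r, mul1mx, mulmx1) -scalar_mxM exprS.
by [].
Qed.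

End Lift.
Section Det.
Variable R : realType.
Variable n : nat.
Implicit Types u v : 'cV[R]_n.
Implicit Types s : seq 'cV[R]_n.

Lemma det_Hm u : unit_vector u -> \det (Hm u) = -1.
Proof.
move=> hu.
pose X := block_mx (1%:M : 'M[R]_1) u^T (2 *: u) (1%:M : 'M[R]_n).
have h1 : block_mx (1%:M : 'M[R]_1) 0 (2 *: u) 1%:M *m block_mx 1%:M u^T 0 (Hm u) = X.
  rewrite mulmx_block !(mul0mx, mulmx0, mul1mx, mulmx1, addr0, add0r) /X.
  by rewrite /Hm -scalemxAl addrC subrK.
have h2 : block_mx (1%:M : 'M[R]_1) u^T 0 1%:M *m block_mx (-1)%:M 0 (2 *: u) 1%:M = X.
  rewrite mulmx_block !(mul0mx, mulmx0, mul1mx, mulmx1, addr0, add0r) /X.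
  rewrite -scalemxAr utu //; congr block_mx.
  by apply/matrixP => i j; rewrite (ord1 i) (ord1 j) !mxE /=; ring.
have := congr1 determinant h1; rewrite det_mulmx det_lblock det_ublock !det1 !mul1r => ->.
by rewrite -h2 det_mulmx det_ublock det_lblock !det1 det_scalar1 !mul1r mulr1.
Qed.

Lemma det_Ms s : units s -> \det (Ms s) = (-1) ^+ size s.
Proof.
elim: s => [|u s IH] hs; first by rewrite /= det1 expr0.
have hu : unit_vector u by apply: hs; rewrite inE eqxx.
have hs' : units s by move=> w hw; apply: hs; rewrite inE hw orbT.
by rewrite /= -/(Ms s) det_mulmx det_Hm // IH // exprS.
Qed.

Lemma rho_Phi s : units s ->
  rho (Phi (prodv s)) = block_mx (Ms s) 0 0 (\det (Ms s))%:M.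
Proof.
move=> hs; rewrite Phi_prodv rho_prodv; last exact: units_flat.
by rewrite Ms_flat det_Ms.
Qed.

End Det.
Lemma units_cat (R : realType) n (s1 s2 : seq 'cV[R]_n) : units s1 -> units s2 -> units (s1 ++ s2).
Proof. by move=> h1 h2 v; rewrite mem_cat => /orP [/h1|/h2]. Qed.

Section Back.
Variable R : realType.
Variable n : nat.

Lemma lift_back (hn : (0 < n)%N) (P : 'M[R]_n) (y : Cl R (n + 1)) :
  P *m P^T = 1%:M -> in_Pin y -> rho y = block_mx P 0 0 (\det P)%:M ->
  exists x : Cl R n, in_Pin x /\ Phi x = y.
Proof.
move=> hP [s' [hs' ey]] hr.
have hy : y = prodv s' := ey.
have [s [hs hMs]] := CD hP.
pose s1 := flat s.
have hs1 : units s1 := units_flat hs.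
have e1 : Ms s1 = block_mx P 0 0 (\det P)%:M.
  by rewrite -rho_prodv // -Phi_prodv rho_Phi // hMs.
have e2 : Ms s' = block_mx P 0 0 (\det P)%:M by rewrite -rho_prodv // -hy.
pose t := rev (map (fun u => - u) s1).
have hz : units (s' ++ t) by apply: units_cat => //; apply: units_rev.
have hMz : Ms (s' ++ t) = 1%:M by rewrite Ms_cat e2 -e1 Ms_inv.
have hyz : cl_mul (prodv (s' ++ t)) (prodv s1) = y.
  by rewrite prodv_cat /t -conj_prodv mulA conj_prodv_inv // mulx1 hy.
case: (kernel hz hMz) => hk; rewrite hk in hyz.
  exists (prodv s); split; first by exists s.
  by rewrite Phi_prodv -hyz mul1x.
pose e0 : 'cV[R]_n := delta_mx (Ordinal hn) 0.
have he0 : unit_vector e0.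
  apply/unitE; rewrite /e0 -(mul1mx (delta_mx _ _)) -colE ip_e1 colE mul1mx mxE !eqxx.
  by [].
exists (prodv (s ++ [:: e0; e0])); split.
  exists (s ++ [:: e0; e0]); split => //.
  apply: units_cat => // v; rewrite !inE => /orP [/eqP ->|/eqP ->]; exact: he0.
rewrite prodv_cat Phi_mul Phi_prodv -hyz mulZl mul1x.
have -> : prodv [:: e0; e0] = cls (-1) (cl_one R n).
  by rewrite !prodv_cons /prodv /= mulx1 vec_sq (proj1 (unitE e0) he0).
by rewrite Phi_cls Phi_one mulZr mulx1.
Qed.

End Back.

Unset Implicit Arguments.

Theorem lemma6p2 (R : realType) (gT : finGroupType) (G : {group gT}) (n : nat)
    (pi : gT -> 'M[R]_n) :
  orth_rep G pi ->
  (spinorial G pi <-> spinorial G (dsum_det pi)).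
Proof.
move=> [horth hhom]; split.
  move=> [ph [hpin [hmul hrho]]]; exists (fun g => Phi (ph g)); split; [|split].
  - move=> g hg; have [s [hs ->]] := hpin g hg.
    exists (flat s); split; [exact: units_flat | exact: Phi_prodv].
  - by move=> g h hg hh; rewrite hmul // Phi_mul.
  - move=> g hg; have [s [hs e]] := hpin g hg.
    rewrite /dsum_det -(hrho g hg) e -/(prodv s) rho_Phi // rho_prodv //.
move=> [ph [hpin [hmul hrho]]].
case: (posnP n) => hn.
  exists (fun _ => cl_one R n); split; [|split].
  - by move=> g _; exists [::].
  - by move=> g h _ _; rewrite mul1x.
  - move=> g _; apply/matrixP => i; have := ltn_ord i; by rewrite {2}hn.
have hex : forall g, exists x : Cl R n, g \in G -> in_Pin x /\ Phi x = ph g.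
  move=> g; case: (boolP (g \in G)) => hg; last by exists (cl_one R n).
  have [x hx] := lift_back hn (horth g hg) (hpin g hg) (hrho g hg).
  by exists x.
pose f := fun g => proj1_sig (constructive_indefinite_description _ (hex g)).
have hf : forall g, g \in G -> in_Pin (f g) /\ Phi (f g) = ph g.
  by move=> g; exact: (proj2_sig (constructive_indefinite_description _ (hex g))).
exists f; split; [|split].
- by move=> g hg; case: (hf g hg).
- move=> g h hg hh; apply: Phi_inj.
  rewrite Phi_mul (proj2 (hf _ (groupM hg hh))) (proj2 (hf g hg)) (proj2 (hf h hh)).
  exact: hmul.
- move=> g hg; have [[s [hs e]] hPhi] := hf g hg.
  have := hrho g hg; rewrite -hPhi e -/(prodv s) rho_Phi // /dsum_det => /(congr1 ulsubmx).
  by rewrite !block_mxKul -rho_prodv.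
Qed.
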